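(* Let $A$ be the $2$-pole obtained from the Petersen graph by cutting one edge into a pair of dangling edges. Then: (a) every perfect matching of $A$ contains either both dangling edges or neither of them; (b) if $M_1, M_2, M_3$ are perfect matchings of $A$ none of which contains a dangling edge, then at least $2$ links of $A$ are not covered by $M_1\cup M_2\cup M_3$, and for a suitable such triple exactly $2$ links are uncovered; (c) if $M_1, M_2, M_3$ are perfect matchings of $A$ one of which contains a dangling edge, then at least $3$ links of $A$ are not covered by $M_1\cup M_2\cup M_3$, and for a suitable such triple exactly $3$ links are uncovered.
   Context: A multipole is a cubic ''graph with dangling edges'': each edge is either a link (joining two vertices) or a dangling edge (with only one end incident with a vertex). Cutting an edge $uv$ into a pair of dangling edges means deleting $uv$ and attaching one new dangling edge to $u$ and one to $v$. A perfect matching of a multipole is a set of links and dangling edges such that every vertex is incident with exactly one of them. *)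

(* Defs.v *)
From mathcomp Require Import all_boot.
Set Implicit Arguments. Unset Strict Implicit. Unset Printing Implicit Defensive.

(* Petersen graph on vertices 0..9: outer 5-cycle 0-1-2-3-4-0, spokes i-(i+5),
   inner pentagram 5-7-9-6-8-5.  Edges are listed as pairs (u,v) with u < v. *)
Definition petersen_edges : seq (nat * nat) :=
  [:: (0,1); (1,2); (2,3); (3,4); (0,4);
      (0,5); (1,6); (2,7); (3,8); (4,9);
      (5,7); (7,9); (6,9); (6,8); (5,8)].

Definition cut_edge : nat * nat := (0,1).

(* Edges of a multipole on vertex set 'I_10: a link is an ordered pair (u,v)
   with u < v; a dangling edge is indexed by a bool. *)
Definition medge := (('I_10 * 'I_10) + bool)%type.

Definition A_links : {set medge} :=
  [set e : medge | if e is inl (u, v) then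
      ((val u, val v) \in petersen_edges) && ((val u, val v) != cut_edge)
    else false].

(* Dangling edges of A: dangling false is attached to vertex 0,
   dangling true to vertex 1 (the ends of the cut edge). *)
Definition dangle_end (b : bool) : nat := if b then 1 else 0.

Definition A_dangling : {set medge} := [set e : medge | if e is inr _ then true else false].

Definition A_edges : {set medge} := A_links :|: A_dangling.

Definition incident (e : medge) (x : 'I_10) : bool :=
  match e with
  | inl (u, v) => (x == u) || (x == v)
  | inr b => val x == dangle_end b
  end.

Definition perfect_matching (M : {set medge}) : Prop :=
  M \subset A_edges /\ forall x : 'I_10, #|[set e in M | incident e x]| = 1.

Definition has_dangling (M : {set medge}) : bool := [exists e in M, e \in A_dangling].

Definition uncovered (M1 M2 M3 : {set medge}) : nat :=
  #|A_links :\: (M1 :|: M2 :|: M3)|.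

Definition dangle0 : medge := inr false.
Definition dangle1 : medge := inr true.

(* Main.v *)
Require Import Defs.
From mathcomp Require Import all_boot.

Definition o (n : nat) (H : n < 10) : 'I_10 := @Ordinal 10 n H.
Definition lk (a b : nat) (Ha : a < 10) (Hb : b < 10) : medge := inl (o a Ha, o b Hb).
Definition L : seq medge :=
  [:: lk 1 2 isT isT; lk 2 3 isT isT; lk 3 4 isT isT; lk 0 4 isT isT;
      lk 0 5 isT isT; lk 1 6 isT isT; lk 2 7 isT isT; lk 3 8 isT isT;
      lk 4 9 isT isT; lk 5 7 isT isT; lk 7 9 isT isT; lk 6 9 isT isT;
      lk 6 8 isT isT; lk 5 8 isT isT; inr false; inr true].
Definition ords : seq 'I_10 := [:: o 0 isT; o 1 isT; o 2 isT; o 3 isT; o 4 isT;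
  o 5 isT; o 6 isT; o 7 isT; o 8 isT; o 9 isT].

Lemma in_ords (x : 'I_10) : x \in ords.
Proof.
rewrite -(mem_map val_inj). have -> : map val ords = iota 0 10 by [].
by rewrite mem_iota /= ltn_ord.
Qed.

Definition allM : seq medge :=
  [seq inl (u, v) | u <- ords, v <- ords] ++ [:: inr false; inr true].

Lemma allM_all (p : pred medge) : all p allM -> forall e, p e.
Proof.
move=> /allP H [[u v]|b]; apply: H; rewrite mem_cat.
  by rewrite (allpairs_f (fun u v => (inl (u, v) : medge))) ?in_ords.
by case: b; rewrite !inE eqxx ?orbT.
Qed.

Fixpoint allbits n : seq (seq bool) :=
  if n is n'.+1 then [seq b :: s | b <- [:: false; true], s <- allbits n'] else [:: [::]].

Lemma allbitsP (b : seq bool) : b \in allbits (size b).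
Proof.
elim: b => [|x b IH]; first by [].
change (x :: b \in [seq y :: s | y <- [:: false; true], s <- allbits (size b)]).
apply: (allpairs_f (fun y s => y :: s)) => //; by case: x.
Qed.

Definition ends : seq (nat*nat) := [:: (1,2); (2,3); (3,4); (0,4); (0,5); (1,6); (2,7); (3,8); (4,9); (5,7); (7,9); (6,9); (6,8); (5,8); (0,0); (1,1)].
Definition incn i v := let p := nth (0,0) ends i in (v == p.1) || (v == p.2).
Definition P2 (b : seq bool) := all (fun v => count (fun p => p.1 && incn p.2 v) (zip b (iota 0 16)) == 1) (iota 0 10).

Definition good : seq (seq bool) :=
 [:: [:: false; false; false; false; true; true; true; true; true;
               false; false; false; false; false; false; false];
           [:: false; false; true; false; false; false; true; false; false;
               false; false; true; false; true; true; true];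
           [:: false; true; false; false; false; false; false; false; true;
               true; false; false; true; false; true; true];
           [:: false; true; false; true; false; true; false; false; false;
               false; true; false; false; true; false; false];
           [:: true; false; false; true; false; false; false; true; false;
               true; false; true; false; false; false; false];
           [:: true; false; true; false; true; false; false; false; false;
               false; true; false; true; false; false; false]].

Lemma goodE : [seq b <- allbits 16 | P2 b] = good.
Proof. by vm_compute. Qed.

Lemma count_zip (A B : Type) (s : seq A) (t : seq B) f g h :
  map g s = map h t ->
  count (fun e => f e && g e) s = count (fun p => p.1 && h p.2) (zip (map f s) t).
Proof.
elim: s t => [|a s IH] [|c t] //= [e1 e2].
by rewrite (IH t e2) e1.
Qed.

Arguments count_zip {A B s t} f {g h}.

Lemma incL (x : 'I_10) :
  map (fun e => incident e x) L = map (fun i => incn i (val x)) (iota 0 16).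
Proof.
apply/eqP; move: x (in_ords x); apply/allP. by vm_compute.
Qed.

Lemma uniqL : uniq L. Proof. by vm_compute. Qed.

Lemma card_L (A : {set medge}) : (forall e, e \in A -> e \in L) ->
  #|A| = count (fun e => e \in A) L.
Proof.
move=> sub; rewrite -size_filter.
have u : uniq (filter (fun e => e \in A) L) by rewrite filter_uniq // uniqL.
rewrite -(card_uniqP u); apply: eq_card => e; rewrite mem_filter.
by case eA: (e \in A) => //=; rewrite sub.
Qed.

Definition linkb (e : medge) : bool := if e is inl (u, v) then
      ((val u, val v) \in petersen_edges) && ((val u, val v) != cut_edge)
    else false.
Definition dangb (e : medge) : bool := if e is inr _ then true else false.

Lemma inLinks e : (e \in A_links) = linkb e. Proof. by rewrite inE. Qed.
Lemma inEdges e : (e \in A_edges) = linkb e || dangb e.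
Proof. by rewrite !inE. Qed.

Lemma edgesL e : linkb e || dangb e -> e \in L.
Proof.
move=> h; apply: (implyP (@allM_all (fun e : medge => (linkb e || dangb e) ==> (e \in L)) _ e) h).
by vm_compute.
Qed.

Definition mb (b : seq bool) e := (e \in L) && nth false b (index e L).
Definition setOf b : {set medge} := [set e | mb b e].

Lemma pmE M : perfect_matching M <-> exists2 b, b \in good & M = setOf b.
Proof.
split.
- case=> /subsetP sub cnt.
  have ML : forall e, e \in M -> e \in L by move=> e /sub; rewrite inEdges; apply: edgesL.
  exists (map (fun e => e \in M) L).
    rewrite -goodE mem_filter.
    have -> : 16 = size (map (fun e => e \in M) L) by rewrite size_map.
    rewrite allbitsP andbT; apply/allP => v; rewrite mem_iota /= => vlt.
    have := cnt (Ordinal vlt).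
    rewrite card_L; last by move=> e; rewrite inE => /andP[/ML].

    under eq_count do rewrite inE.
    by rewrite (count_zip _ (incL (Ordinal vlt))) => H; apply/eqP; exact: H.
  apply/setP => e; rewrite inE /mb.
  case eL: (e \in L); last by apply/negbTE/negP => /ML; rewrite eL.
  by rewrite andTb (nth_map e) ?index_mem // nth_index.

- case=> b bg ->; split.
    apply/subsetP => e; rewrite inEdges inE /mb => /andP[eL _].
    move: e eL; apply/allP; by vm_compute.
  move=> x.
  rewrite card_L; last by move=> e; rewrite !in_set /mb => /andP[/andP[]].
  under eq_count do rewrite !in_set.
  rewrite (count_zip _ (incL x)).
  have -> : map (fun e => mb b e) L = b.
    apply/eqP; move: b bg; apply/allP; by vm_compute.
  have : P2 b by move: bg; rewrite -goodE mem_filter => /andP[].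
  move=> /allP /(_ (val x)); rewrite mem_iota /= ltn_ord => /(_ isT) /eqP.
  done.
Qed.

Lemma hdE M : has_dangling M = (dangle0 \in M) || (dangle1 \in M).
Proof.
apply/existsP/orP => [[e /andP[eM]]|[h|h]].
- by rewrite in_set; case: e eM => // -[] eM _; [right|left].
- by exists dangle0; rewrite h in_set.
- by exists dangle1; rewrite h in_set.
Qed.

Lemma uncE b1 b2 b3 : uncovered (setOf b1) (setOf b2) (setOf b3) =
  count (fun e => linkb e && ~~ (mb b1 e || mb b2 e || mb b3 e)) L.
Proof.
rewrite /uncovered card_L.
  by apply: eq_count => e; rewrite in_setD inLinks !in_setU !in_set andbC.
move=> e; rewrite in_setD inLinks => /andP[_ h]; apply: edgesL; by rewrite h.
Qed.

Lemma all3 (p : seq bool -> seq bool -> seq bool -> bool) :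
  all (fun b1 => all (fun b2 => all (fun b3 => p b1 b2 b3) good) good) good ->
  forall b1 b2 b3, b1 \in good -> b2 \in good -> b3 \in good -> p b1 b2 b3.
Proof.
move=> /allP H b1 b2 b3 g1 g2 g3.
by move: (H b1 g1) => /allP /(_ b2 g2) /allP /(_ b3 g3).
Qed.

Lemma pm_good b : b \in good -> perfect_matching (setOf b).
Proof. by move=> g; apply/pmE; exists b. Qed.

Theorem lemma1 :
  (* (a) *)
  (forall M, perfect_matching M -> (dangle0 \in M) = (dangle1 \in M))
  /\
  (* (b) *)
  ((forall M1 M2 M3, perfect_matching M1 -> perfect_matching M2 -> perfect_matching M3 ->
      ~~ has_dangling M1 -> ~~ has_dangling M2 -> ~~ has_dangling M3 ->
      2 <= uncovered M1 M2 M3)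
   /\ exists M1 M2 M3, (perfect_matching M1 /\ perfect_matching M2 /\ perfect_matching M3)
        /\ [&& ~~ has_dangling M1, ~~ has_dangling M2 & ~~ has_dangling M3]
        /\ uncovered M1 M2 M3 = 2)
  /\
  (* (c) *)
  ((forall M1 M2 M3, perfect_matching M1 -> perfect_matching M2 -> perfect_matching M3 ->
      [|| has_dangling M1, has_dangling M2 | has_dangling M3] ->
      3 <= uncovered M1 M2 M3)
   /\ exists M1 M2 M3, (perfect_matching M1 /\ perfect_matching M2 /\ perfect_matching M3)
        /\ [|| has_dangling M1, has_dangling M2 | has_dangling M3]
        /\ uncovered M1 M2 M3 = 3).
Proof.
split; [|split; split].
- move=> M /pmE [b bg ->]; rewrite !in_set; apply/eqP.
  move: b bg; apply/allP; by vm_compute.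
- move=> M1 M2 M3 /pmE[b1 g1 ->] /pmE[b2 g2 ->] /pmE[b3 g3 ->].
  rewrite !hdE !in_set uncE.
  move=> h1 h2 h3.
  move: b1 b2 b3 g1 g2 g3 h1 h2 h3.
  have := @all3 (fun b1 b2 b3 => ~~ (mb b1 dangle0 || mb b1 dangle1) ==>
     ~~ (mb b2 dangle0 || mb b2 dangle1) ==> ~~ (mb b3 dangle0 || mb b3 dangle1) ==>
     (2 <= count (fun e => linkb e && ~~ (mb b1 e || mb b2 e || mb b3 e)) L)).
  move=> H b1 b2 b3 g1 g2 g3 h1 h2 h3.
  have := H (ltac:(vm_compute; reflexivity)) b1 b2 b3 g1 g2 g3.
  by rewrite h1 h2 h3.
- exists (setOf (nth [::] good 3)), (setOf (nth [::] good 4)), (setOf (nth [::] good 0)).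
  split; first by split; [|split]; apply: pm_good; vm_compute.
  rewrite !hdE !in_set uncE; by vm_compute.
- move=> M1 M2 M3 /pmE[b1 g1 ->] /pmE[b2 g2 ->] /pmE[b3 g3 ->].
  rewrite !hdE !in_set uncE.
  move=> h.
  move: b1 b2 b3 g1 g2 g3 h.
  have := @all3 (fun b1 b2 b3 => [|| (mb b1 dangle0 || mb b1 dangle1),
     (mb b2 dangle0 || mb b2 dangle1) | (mb b3 dangle0 || mb b3 dangle1)] ==>
     (3 <= count (fun e => linkb e && ~~ (mb b1 e || mb b2 e || mb b3 e)) L)).
  move=> H b1 b2 b3 g1 g2 g3 h.
  have := H (ltac:(vm_compute; reflexivity)) b1 b2 b3 g1 g2 g3.
  by rewrite h.
- exists (setOf (nth [::] good 0)), (setOf (nth [::] good 2)), (setOf (nth [::] good 1)).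
  split; first by split; [|split]; apply: pm_good; vm_compute.
  rewrite !hdE !in_set uncE; by vm_compute.
Qed.
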